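(* Let $\mathcal{A}$ be a complete topological ring and let $\mathcal{B}$ be a complete topological $\mathcal{A}$-algebra. Then there is a one-to-one correspondence between restricted exponential $\mathcal{A}$-homomorphisms $\mathrm{e}\colon\mathcal{B}\rightarrow\mathcal{B}\{T\}$ and topologically integrable iterated higher $\mathcal{A}$-derivations of $\mathcal{B}$, given by associating to $\mathrm{e}=\sum_{i\in\mathbb{N}}\mathrm{e}_iT^i$ the family $D=\{D^{(i)}\}_{i\ge0}$ with $D^{(i)}=\mathrm{e}_i$ (and conversely $D\mapsto\sum_i D^{(i)}T^i$).
   Context: Conventions: all topological rings and modules are linearly topologized and admit a countable fundamental system of neighbourhoods of $0$ consisting of open ideals (resp. submodules); homomorphisms of topological rings/modules are continuous. A topological ring is complete if the canonical map to $\varprojlim_{\mathfrak{a}}\mathcal{A}/\mathfrak{a}$ (over open ideals, quotients discrete, inverse limit topology) is an isomorphism of topological rings. A complete topological $\mathcal{A}$-algebra is a complete topological ring with a continuous ring homomorphism from $\mathcal{A}$. For a complete topological ring $\mathcal{B}$, $\mathcal{B}\{T\}$ (resp. $\mathcal{B}\{T,T'\}$) is the ring of restricted power series: formal power series whose coefficients converge to $0$ (for every open ideal $\mathfrak{b}$, all but finitely many coefficients lie in $\mathfrak{b}$), topologized by the ideals of series with all coefficients in $\mathfrak{b}$, $\mathfrak{b}$ open. A restricted exponential $\mathcal{A}$-homomorphism is a continuous $\mathcal{A}$-algebra homomorphism $\mathrm{e}\colon\mathcal{B}\to\mathcal{B}\{T\}$, written $\mathrm{e}(b)=\sum_i\mathrm{e}_i(b)T^i$,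 such that $\mathrm{e}_0=\mathrm{id}_{\mathcal{B}}$ and, for every $b\in\mathcal{B}$, $\sum_{(i,j)\in\mathbb{N}^2}\mathrm{e}_j(\mathrm{e}_i(b))T'^jT^i=\sum_{\ell\in\mathbb{N}}\mathrm{e}_\ell(b)(T+T')^\ell$ in $\mathcal{B}\{T,T'\}$. A continuous iterated higher $\mathcal{A}$-derivation of $\mathcal{B}$ is a family $D=\{D^{(i)}\}_{i\ge0}$ of continuous $\mathcal{A}$-module homomorphisms $\mathcal{B}\to\mathcal{B}$ with $D^{(0)}=\mathrm{id}$, $D^{(i)}(bb')=\sum_{j=0}^iD^{(j)}(b)D^{(i-j)}(b')$ and $D^{(i)}\circ D^{(j)}=\binom{i+j}{i}D^{(i+j)}$. It is topologically integrable if $(D^{(i)})_i$ converges continuously to $0$: for every $b\in\mathcal{B}$ and open ideal $\mathfrak{b}'$ there exist an open ideal $\mathfrak{b}$ and $n_0$ with $D^{(n)}(b+\mathfrak{b})\subseteq\mathfrak{b}'$ for all $n\ge n_0$. *)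

(* Defs.v *)
From mathcomp Require Import all_boot all_algebra.
Set Implicit Arguments. Unset Strict Implicit. Unset Printing Implicit Defensive.
Import GRing.Theory.
Local Open Scope ring_scope.

Definition is_ideal (R : comPzRingType) (I : R -> Prop) : Prop :=
  [/\ I 0, (forall x y, I x -> I y -> I (x + y)), (forall x, I x -> I (- x))
    & (forall r x, I x -> I (r * x))].

(* A linear topology with a countable fundamental system of neighbourhoods
   of 0 consisting of open ideals, presented by a decreasing sequence of
   ideals U 0 ⊇ U 1 ⊇ ... ; the open ideals are those containing some U n. *)
Definition lin_top (R : comPzRingType) (U : nat -> R -> Prop) : Prop :=
  (forall n, is_ideal (U n)) /\ (forall n x, U n.+1 x -> U n x).

(* Completeness: the canonical map R -> lim_n R / U n is bijective
   (injective: separatedness; surjective: every compatible family of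
   residue classes, given by representatives x n with x (n+1) = x n mod U n,
   comes from an element of R).  Since the U n are cofinal among the open
   ideals, this is the inverse limit over all open ideals, and a bijection
   is automatically a homeomorphism for these topologies. *)
Definition complete (R : comPzRingType) (U : nat -> R -> Prop) : Prop :=
  (forall x : R, (forall n, U n x) -> x = 0) /\
  (forall x : nat -> R, (forall n, U n (x n.+1 - x n)) ->
     exists y : R, forall n, U n (y - x n)).

(* Continuity of a map between linearly topologized rings (used for additive
   maps, for which continuity at 0 is continuity). *)
Definition lt_continuous (R S : comPzRingType) (UR : nat -> R -> Prop)
  (US : nat -> S -> Prop) (g : R -> S) : Prop :=
  forall n, exists m, forall x, UR m x -> US n (g x).

Definition cont_A_linear (A B : comPzRingType) (f : {rmorphism A -> B})
  (UB : nat -> B -> Prop) (D : B -> B) : Prop :=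
  [/\ (forall x y, D (x + y) = D x + D y),
      (forall a x, D (f a * x) = f a * D x)
    & lt_continuous UB UB D].

(* A family E = (E i)_i of maps B -> B represents the map
   e : B -> B[[T]], e(b) = \sum_i E i b T^i. *)

(* e takes values in B{T}: coefficients converge to 0. *)
Definition coeffs_to_zero (B : comPzRingType) (UB : nat -> B -> Prop)
  (c : nat -> B) : Prop :=
  forall n, exists i0, forall i, (i0 <= i)%N -> UB n (c i).

Definition restricted_exp (A B : comPzRingType) (f : {rmorphism A -> B})
  (UB : nat -> B -> Prop) (E : nat -> B -> B) : Prop :=
  [/\
      (forall b, coeffs_to_zero UB (fun i => E i b)),
      (* continuity, for the topology of B{T} given by the ideals of series
         with all coefficients in U n *)
      (forall n, exists m, forall b, UB m b -> forall i, UB n (E i b)),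
      (* e is a ring homomorphism B -> B{T} *)
      [/\ (forall i x y, E i (x + y) = E i x + E i y),
          (forall i x y, E i (x * y) = \sum_(j < i.+1) E j x * E (i - j)%N y),
          E 0%N 1 = 1 & (forall i, E i.+1 1 = 0)],
      (* e is compatible with the A-algebra structures (B{T} gets its
         A-algebra structure through constants) *)
      (forall a, E 0%N (f a) = f a /\ forall i, E i.+1 (f a) = 0) /\
      (forall b, E 0%N b = b)
    & (* exponential condition, coefficient of T^i T'^j in
         \sum_{i,j} e_j(e_i(b)) T'^j T^i = \sum_l e_l(b) (T+T')^l *)
      (forall b i j, E j (E i b) = E (i + j)%N b *+ 'C(i + j, i))].

Definition iterated_HS_derivation (A B : comPzRingType) (f : {rmorphism A -> B})
  (UB : nat -> B -> Prop) (D : nat -> B -> B) : Prop :=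
  [/\ (forall i, cont_A_linear f UB (D i)),
      (forall b, D 0%N b = b),
      (forall i x y, D i (x * y) = \sum_(j < i.+1) D j x * D (i - j)%N y)
    & (forall i j b, D i (D j b) = D (i + j)%N b *+ 'C(i + j, i))].

(* Topological integrability: (D i)_i converges continuously to 0. *)
Definition top_integrable (B : comPzRingType) (UB : nat -> B -> Prop)
  (D : nat -> B -> B) : Prop :=
  forall (b : B) (n' : nat), exists m n0, forall k, (n0 <= k)%N ->
    forall x, UB m x -> UB n' (D k (b + x)).

(* Main.v *)
Require Import Defs.
From mathcomp Require Import all_boot all_algebra.
Import GRing.Theory.
Local Open Scope ring_scope.

Lemma lt_mono (R : comPzRingType) (U : nat -> R -> Prop) :
  lin_top U -> forall m n x, (m <= n)%N -> U n x -> U m x.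
Proof.
move=> [_ Hd] m n x; elim: n => [|n IH].
  by rewrite leqn0 => /eqP ->.
rewrite leq_eqVlt => /orP [/eqP -> //| Hlt] Hx.
by apply: IH; [exact: Hlt | exact: Hd].
Qed.

Lemma bin_swap i j : 'C(j + i, j) = 'C(i + j, i).
Proof.
have := @bin_sub (i + j) i (leq_addr j i).
by rewrite addKn addnC.
Qed.

Lemma dbl0 (B : comPzRingType) (x : B) : x = x + x -> x = 0.
Proof. by move=> h; apply/(addrI x); rewrite addr0; exact: esym h. Qed.

Lemma E1_zero (B : comPzRingType) (E : nat -> B -> B) :
  E 0%N 1 = 1 ->
  (forall i x y, E i (x * y) = \sum_(j < i.+1) E j x * E (i - j)%N y) ->
  forall i, E i.+1 1 = 0.
Proof.
move=> H0 Hm.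
have H : forall n i, (i <= n)%N -> E i.+1 1 = 0.
  elim=> [|n IH] i.
    rewrite leqn0 => /eqP ->.
    have := Hm 1%N 1 1; rewrite mulr1 2!big_ord_recl big_ord0 /= H0.
    rewrite /bump /= subn0 addn0 mul1r mulr1 addr0; exact: dbl0.
  rewrite leq_eqVlt => /orP [/eqP -> | Hlt]; last by apply: IH.
  have := Hm n.+2 1 1; rewrite mulr1 big_ord_recl big_ord_recr /= H0.
  rewrite subn0 subnn H0 mul1r mulr1.
  rewrite big1; first by rewrite add0r /bump /= add1n; exact: dbl0.
  move=> k _; rewrite /bump /= add1n.
  by rewrite (IH k) ?mul0r // -ltnS ltn_ord.
by move=> i; apply: (H i).
Qed.

Theorem theorem2p26 (A B : comPzRingType)
  (UA : nat -> A -> Prop) (UB : nat -> B -> Prop) (f : {rmorphism A -> B}) :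
  lin_top UA -> complete UA -> lin_top UB -> complete UB ->
  lt_continuous UA UB f ->
  forall E : nat -> B -> B,
    restricted_exp f UB E <->
    (iterated_HS_derivation f UB E /\ top_integrable UB E).
Proof.
move=> _ _ HB _ _ E; have [HI _] := HB.
split.
- move=> [Hc Hcont [Hadd Hmul H01 H1] [Hf Hid] Hexp]; split.
    split.
    + move=> i; split.
      * exact: Hadd.
      * move=> a x; rewrite Hmul big_ord_recl big1 ?addr0 /=.
          by rewrite subn0 Hid.
        by move=> k _; rewrite /bump /= (proj2 (Hf a)) mul0r.
      * move=> n; have [m Hm] := Hcont n; exists m => x Hx; exact: Hm.
    + exact: Hid.
    + exact: Hmul.
    + by move=> i j b; rewrite Hexp bin_swap addnC.
  move=> b n'; have [i0 Hi0] := Hc b n'; have [m Hm] := Hcont n'.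
  exists m, i0 => k Hk x Hx; rewrite Hadd.
  by have [_ Hs _ _] := HI n'; apply: Hs; [apply: Hi0 | apply: Hm].
- move=> [[Hlin Hid Hmul Hexp] Hint].
  have Hadd : forall i x y, E i (x + y) = E i x + E i y.
    by move=> i; have [? _ _] := Hlin i.
  have H01 : E 0%N 1 = 1 by apply: Hid.
  have H1 := @E1_zero B E H01 Hmul.
  split.
  + move=> b n; have [m [n0 Hn]] := Hint b n; exists n0 => i Hi.
    have := Hn i Hi 0; rewrite addr0; apply.
    by have [? _ _ _] := HI m.
  + move=> n; have [m [n0 Hn]] := Hint 0 n.
    have HN : forall N, exists M, forall b, UB M b -> forall k, (k < N)%N -> UB n (E k b).
      elim=> [|N [M HM]]; first by exists 0%N.
      have [_ _ Hc] := Hlin N; have [mN HmN] := Hc n.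
      exists (maxn M mN) => b Hb k; rewrite ltnS leq_eqVlt => /orP [/eqP -> | Hk].
        by apply: HmN; apply: (@lt_mono _ _ HB _ _ _ _ Hb); rewrite leq_maxr.
      by apply: HM => //; apply: (@lt_mono _ _ HB _ _ _ _ Hb); rewrite leq_maxl.
    have [M HM] := HN n0.
    exists (maxn m M) => b Hb k; case: (ltnP k n0) => Hk.
      by apply: HM => //; apply: (@lt_mono _ _ HB _ _ _ _ Hb); rewrite leq_maxr.
    have := Hn k Hk b; rewrite add0r; apply.
    by apply: (@lt_mono _ _ HB _ _ _ _ Hb); rewrite leq_maxl.
  + split => //.
  + split => //; move=> a; split; first exact: Hid.
    move=> i; have [_ Hf _] := Hlin i.+1.
    by rewrite -[f a]mulr1 Hf H1 mulr0.
  + by move=> b i j; rewrite Hexp bin_swap addnC.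
Qed.
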